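(* Let $\bar P_1,\bar P_2>0$ and $0<h_1\le h_2$. For $\mathbf P=(P_1,P_2)$ with $0\le P_k\le\bar P_k$ let $$R(\mathbf P)=\tfrac12\big[\log(1+P_1)+\log(1+P_2)-\log(1+h_1P_1+h_2P_2)\big]^+ .$$ Then the following allocation maximizes $R$ over $[0,\bar P_1]\times[0,\bar P_2]$: $$(P^*_1,P^*_2)=\begin{cases}(\bar P_1,\bar P_2),&\text{if } h_1\le1+h_2\bar P_2\text{ and }h_2<1+h_1\bar P_1,\\(\bar P_1,0),&\text{if } h_1<1\text{ and }h_2\ge1+h_1\bar P_1,\\(0,0),&\text{otherwise.}\end{cases}$$
   Context: $\log$ base 2, $[x]^+=\max\{x,0\}$. $R(\mathbf P)$ is the secrecy sum-rate bound of the superposition region of the standardized Gaussian two-way wire-tap channel, with $h_1,h_2$ the standardized eavesdropper gains of terminals 1 and 2. *)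

(* Defs.v *)
From Stdlib Require Import Reals Lra.
Open Scope R_scope.

Definition log2 (x : R) : R := ln x / ln 2.

Definition pos_part (x : R) : R := Rmax x 0.

Definition Rsec (h1 h2 P1 P2 : R) : R :=
  / 2 * pos_part (log2 (1 + P1) + log2 (1 + P2) - log2 (1 + h1 * P1 + h2 * P2)).

Definition Pstar (h1 h2 Pb1 Pb2 : R) : R * R :=
  if Rle_dec h1 (1 + h2 * Pb2) then
    if Rlt_dec h2 (1 + h1 * Pb1) then (Pb1, Pb2)
    else if Rlt_dec h1 1 then (Pb1, 0) else (0, 0)
  else if Rlt_dec h1 1 then
    if Rle_dec (1 + h1 * Pb1) h2 then (Pb1, 0) else (0, 0)
  else (0, 0).

(* Main.v *)
Require Import Defs.
From Stdlib Require Import Reals.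
From Stdlib Require Import Lra Psatz.
Open Scope R_scope.

Definition FF (h1 h2 P1 P2 : R) : R := (1 + P1) * (1 + P2) / (1 + h1 * P1 + h2 * P2).

Lemma div_le (x y z w : R) : 0 < y -> 0 < w -> x * w <= z * y -> x / y <= z / w.
Proof.
  intros Hy Hw H.
  replace (x / y) with ((x * w) * / (y * w)) by (field; lra).
  replace (z / w) with ((z * y) * / (y * w)) by (field; lra).
  apply Rmult_le_compat_r; [|exact H].
  left; apply Rinv_0_lt_compat; nra.
Qed.

Lemma mono1 h1 h2 a b P2 : 0 < h1 -> 0 < h2 -> 0 <= a -> 0 <= b -> 0 <= P2 ->
  (a - b) * (1 + h2 * P2 - h1) <= 0 -> FF h1 h2 a P2 <= FF h1 h2 b P2.
Proof.
  intros. unfold FF. apply div_le; [nra|nra|].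
  assert (H5 : (1 + P2) * ((a - b) * (1 + h2 * P2 - h1)) <= 0) by nra.
  nra.
Qed.

Lemma mono2 h1 h2 P1 a b : 0 < h1 -> 0 < h2 -> 0 <= a -> 0 <= b -> 0 <= P1 ->
  (a - b) * (1 + h1 * P1 - h2) <= 0 -> FF h1 h2 P1 a <= FF h1 h2 P1 b.
Proof.
  intros. unfold FF. apply div_le; [nra|nra|].
  assert (H5 : (1 + P1) * ((a - b) * (1 + h1 * P1 - h2)) <= 0) by nra.
  nra.
Qed.

Lemma FF00 h1 h2 : FF h1 h2 0 0 = 1.
Proof. unfold FF. rewrite !Rmult_0_r, !Rplus_0_r. field. Qed.

Lemma FF_pos h1 h2 P1 P2 : 0 < h1 -> 0 < h2 -> 0 <= P1 -> 0 <= P2 -> 0 < FF h1 h2 P1 P2.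
Proof. intros. unfold FF. apply Rdiv_lt_0_compat; nra. Qed.

Lemma corner h1 h2 Pb1 Pb2 P1 P2 : 0 < h1 -> 0 < h2 ->
  0 <= P1 <= Pb1 -> 0 <= P2 <= Pb2 ->
  FF h1 h2 P1 P2 <= Rmax (Rmax (FF h1 h2 0 0) (FF h1 h2 0 Pb2))
                         (Rmax (FF h1 h2 Pb1 0) (FF h1 h2 Pb1 Pb2)).
Proof.
  intros H1 H2 [A1 B1] [A2 B2].
  destruct (Rle_lt_dec 0 (1 + h2 * P2 - h1)) as [s|s].
  - eapply Rle_trans. apply (mono1 h1 h2 P1 Pb1 P2); try lra; nra.
    eapply Rle_trans; [|apply Rmax_r].
    destruct (Rle_lt_dec 0 (1 + h1 * Pb1 - h2)) as [t|t].
    + eapply Rle_trans; [|apply Rmax_r]. apply mono2; try lra; nra.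
    + eapply Rle_trans; [|apply Rmax_l]. apply mono2; try lra; nra.
  - eapply Rle_trans. apply (mono1 h1 h2 P1 0 P2); try lra; nra.
    eapply Rle_trans; [|apply Rmax_l].
    destruct (Rle_lt_dec 0 (1 + h1 * 0 - h2)) as [t|t].
    + eapply Rle_trans; [|apply Rmax_r]. apply mono2; try lra; nra.
    + eapply Rle_trans; [|apply Rmax_l]. apply mono2; try lra; nra.
Qed.

Lemma Rsec_FF h1 h2 P1 P2 : 0 < h1 -> 0 < h2 -> 0 <= P1 -> 0 <= P2 ->
  Rsec h1 h2 P1 P2 = / 2 * Rmax (ln (FF h1 h2 P1 P2) / ln 2) 0.
Proof.
  intros. unfold Rsec, pos_part, log2.
  assert (E : ln (FF h1 h2 P1 P2) = ln (1 + P1) + ln (1 + P2) - ln (1 + h1 * P1 + h2 * P2)).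
  { unfold FF, Rdiv. rewrite ln_mult by (try apply Rinv_0_lt_compat; nra).
    rewrite ln_mult by nra. rewrite ln_Rinv by nra. ring. }
  rewrite E. f_equal. f_equal. field.
  assert (0 < ln 2). { rewrite <- ln_1. apply ln_increasing; lra. } lra.
Qed.

Lemma ln_le' x y : 0 < x -> x <= y -> ln x <= ln y.
Proof. intros Hx [H|H]. left; apply ln_increasing; lra. subst; lra. Qed.

Lemma final h1 h2 P1 P2 Q1 Q2 : 0 < h1 -> 0 < h2 -> 0 <= P1 -> 0 <= P2 -> 0 <= Q1 -> 0 <= Q2 ->
  FF h1 h2 P1 P2 <= Rmax (FF h1 h2 Q1 Q2) 1 -> Rsec h1 h2 P1 P2 <= Rsec h1 h2 Q1 Q2.
Proof.
  intros. rewrite !Rsec_FF by lra.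
  assert (L2 : 0 < ln 2). { rewrite <- ln_1. apply ln_increasing; lra. }
  apply Rmult_le_compat_l; [lra|].
  pose proof (FF_pos h1 h2 P1 P2) as FP. pose proof (FF_pos h1 h2 Q1 Q2) as FQ.
  unfold Rmax in *.
  destruct (Rle_dec (FF h1 h2 Q1 Q2) 1).
  - destruct (Rle_dec (ln (FF h1 h2 P1 P2) / ln 2) 0); [|exfalso].
    + destruct (Rle_dec (ln (FF h1 h2 Q1 Q2) / ln 2) 0); [lra|]. lra.
    + apply n. unfold Rdiv.
      assert (ln (FF h1 h2 P1 P2) <= ln 1) by (apply ln_le'; lra).
      assert (0 < / ln 2) by (apply Rinv_0_lt_compat; lra). rewrite ln_1 in *. nra.
  - assert (ln (FF h1 h2 P1 P2) <= ln (FF h1 h2 Q1 Q2)) by (apply ln_le'; lra).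
    assert (0 < / ln 2) by (apply Rinv_0_lt_compat; lra).
    unfold Rdiv.
    destruct (Rle_dec (ln (FF h1 h2 P1 P2) * / ln 2) 0);
    destruct (Rle_dec (ln (FF h1 h2 Q1 Q2) * / ln 2) 0); nra.
Qed.

Theorem theorem4 (Pb1 Pb2 h1 h2 : R) :
  0 < Pb1 -> 0 < Pb2 -> 0 < h1 -> h1 <= h2 ->
  let P := Pstar h1 h2 Pb1 Pb2 in
  (0 <= fst P <= Pb1 /\ 0 <= snd P <= Pb2) /\
  forall P1 P2 : R, 0 <= P1 <= Pb1 -> 0 <= P2 <= Pb2 ->
    Rsec h1 h2 P1 P2 <= Rsec h1 h2 (fst P) (snd P).
Proof.
  intros HP1 HP2 Hh1 Hh12 P.
  assert (Hh2 : 0 < h2) by lra.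
  assert (K : forall Q1 Q2, 0 <= Q1 <= Pb1 -> 0 <= Q2 <= Pb2 ->
     FF h1 h2 0 Pb2 <= Rmax (FF h1 h2 Q1 Q2) 1 ->
     FF h1 h2 Pb1 0 <= Rmax (FF h1 h2 Q1 Q2) 1 ->
     FF h1 h2 Pb1 Pb2 <= Rmax (FF h1 h2 Q1 Q2) 1 ->
     (0 <= Q1 <= Pb1 /\ 0 <= Q2 <= Pb2) /\
     forall P1 P2 : R, 0 <= P1 <= Pb1 -> 0 <= P2 <= Pb2 ->
       Rsec h1 h2 P1 P2 <= Rsec h1 h2 Q1 Q2).
  { intros Q1 Q2 HQ1 HQ2 C1 C2 C3. split; [tauto|]. intros P1 P2 HA HB.
    apply final; try lra.
    eapply Rle_trans. apply (corner h1 h2 Pb1 Pb2); auto.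
    rewrite FF00. repeat apply Rmax_lub; auto. apply Rmax_r. }
  assert (E00 := FF00 h1 h2).
  assert (M1 : forall a b P2, 0 <= a -> 0 <= b -> 0 <= P2 ->
     (a - b) * (1 + h2 * P2 - h1) <= 0 -> FF h1 h2 a P2 <= FF h1 h2 b P2)
    by (intros; apply mono1; auto).
  assert (M2 : forall P1 a b, 0 <= a -> 0 <= b -> 0 <= P1 ->
     (a - b) * (1 + h1 * P1 - h2) <= 0 -> FF h1 h2 P1 a <= FF h1 h2 P1 b)
    by (intros; apply mono2; auto).
  subst P; unfold Pstar.
  destruct (Rle_dec h1 (1 + h2 * Pb2)) as [a|a].
  - destruct (Rlt_dec h2 (1 + h1 * Pb1)) as [b|b].
    + simpl. apply K; try lra.
      * eapply Rle_trans; [|apply Rmax_l]. apply M1; nra.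
      * eapply Rle_trans; [|apply Rmax_l]. apply M2; nra.
      * apply Rmax_l.
    + apply Rnot_lt_le in b.
      assert (G02 : FF h1 h2 0 Pb2 <= 1). { rewrite <- E00. apply M2; try lra. assert (1 <= h2) by nra. nra. }
      assert (G12 : FF h1 h2 Pb1 Pb2 <= FF h1 h2 Pb1 0) by (apply M2; nra).
      destruct (Rlt_dec h1 1) as [c|c]; simpl; apply K; try lra.
      * eapply Rle_trans; [|apply Rmax_r]. exact G02.
      * apply Rmax_l.
      * eapply Rle_trans; [|apply Rmax_l]. exact G12.
      * rewrite E00. eapply Rle_trans; [|apply Rmax_r]. exact G02.
      * apply Rnot_lt_le in c. assert (FF h1 h2 Pb1 0 <= 1) by (rewrite <- E00; apply M1; nra).
        rewrite E00. eapply Rle_trans; [|apply Rmax_r]. lra.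
      * assert (FF h1 h2 Pb1 0 <= 1) by (rewrite <- E00; apply M1; nra).
        rewrite E00. eapply Rle_trans; [|apply Rmax_r]. lra.
  - apply Rnot_le_lt in a. assert (h1 > 1) by nra.
    assert (G02 : FF h1 h2 0 Pb2 <= 1) by (rewrite <- E00; apply M2; nra).
    assert (G10 : FF h1 h2 Pb1 0 <= 1) by (rewrite <- E00; apply M1; nra).
    assert (G12 : FF h1 h2 Pb1 Pb2 <= FF h1 h2 0 Pb2) by (apply M1; nra).
    destruct (Rlt_dec h1 1) as [c|c]; [lra|]. simpl. apply K; try lra; rewrite E00;
      unfold Rmax; destruct (Rle_dec 1 1); lra.
Qed.
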